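(* For every $y_0\in Y$, $$\liminf_{T\to\infty}V_T(y_0)\ge d^*(y_0)\qquad\text{and}\qquad\liminf_{\alpha\uparrow1}h_\alpha(y_0)\ge d^*(y_0).$$
   Context: Let $Y\subset\mathbb{R}^m$ be nonempty compact, $U_0$ a compact metric space, $U(\cdot):Y\rightsquigarrow U_0$ upper semicontinuous and compact-valued, and $f:\mathbb{R}^m\times U_0\to\mathbb{R}^m$, $k:\mathbb{R}^m\times U_0\to\mathbb{R}$ continuous. Put $A(y):=\{u\in U(y): f(y,u)\in Y\}$ and $G:=\{(y,u): y\in Y,\ u\in A(y)\}$. Standing assumption: $A(y)\ne\emptyset$ for all $y\in Y$. For $y_0\in Y$, an admissible process on $\{0,\dots,T-1\}$ (respectively on $\{0,1,\dots\}$) is a pair $(y(t),u(t))$ with $y(0)=y_0$, $u(t)\in A(y(t))$ and $y(t+1)=f(y(t),u(t))$. The controls of such processes form $\mathcal U_T(y_0)$ (respectively $\mathcal U(y_0)$). Value functions: for $T\in\mathbb N$ and $\alpha\in(0,1)$, $$V_T(y_0):=\frac1T\min_{u\in\mathcal U_T(y_0)}\sum_{t=0}^{T-1}k(y(t),u(t)),\qquad h_\alpha(y_0):=(1-\alpha)\min_{u\in\mathcal U(y_0)}\sum_{t=0}^\infty\alpha^tk(y(t),u(t)).$$ Dual value: $d^*(y_0):=\sup\mu$, where the supremum is over triples $(\mu,\psi,\eta)\in\mathbb{R}\times C(Y)\times C(Y)$ such that for all $(y,u)\in G$: $$k(y,u)+\psi(y_0)-\psi(y)+\eta(f(y,u))-\eta(y)-\mu\ge0,\qquad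 \psi(f(y,u))-\psi(y)\ge0.$$ *)

(* Defs.v *)
From HB Require Import structures.
From mathcomp Require Import all_boot all_order all_algebra.
From mathcomp Require Import all_classical all_reals all_analysis.
Set Implicit Arguments. Unset Strict Implicit. Unset Printing Implicit Defensive.
Import Order.TTheory GRing.Theory Num.Theory.
Import numFieldNormedType.Exports.
Local Open Scope classical_set_scope.
Local Open Scope ring_scope.

Definition usc_on {X Z : topologicalType} (Y : set X) (U : X -> set Z) :=
  forall y, Y y -> forall O : set Z, open O -> U y `<=` O ->
    \forall y' \near y, Y y' -> U y' `<=` O.

Definition compact_valued_on {X Z : topologicalType} (Y : set X)
  (U : X -> set Z) := forall y, Y y -> compact (U y).

Section Control.
Context {R : realType} {m : nat} {U0 : Type}.
Variables (Y : set 'rV[R]_m) (U : 'rV[R]_m -> set U0)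
  (f : 'rV[R]_m -> U0 -> 'rV[R]_m) (k : 'rV[R]_m -> U0 -> R).

Definition Aset (y : 'rV[R]_m) : set U0 := [set u | U y u /\ Y (f y u)].
Definition Gset (y : 'rV[R]_m) (u : U0) : Prop := Y y /\ Aset y u.

Fixpoint traj (y0 : 'rV[R]_m) (u : nat -> U0) (t : nat) : 'rV[R]_m :=
  if t is t'.+1 then f (traj y0 u t') (u t') else y0.

Definition admissibleT (T : nat) (y0 : 'rV[R]_m) (u : nat -> U0) :=
  forall t, (t < T)%N -> Aset (traj y0 u t) (u t).
Definition admissible (y0 : 'rV[R]_m) (u : nat -> U0) :=
  forall t, Aset (traj y0 u t) (u t).

Local Open Scope ereal_scope.
(* V_T(y0) = (1/T) min_{u in U_T(y0)} sum_{t<T} k(y(t),u(t)) (min written as inf) *)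
Definition VT (T : nat) (y0 : 'rV[R]_m) : \bar R :=
  ereal_inf [set ((T%:R)^-1 * \sum_(t < T) k (traj y0 u t) (u t))%R%:E
            | u in admissibleT T y0].

Definition halpha (alpha : R) (y0 : 'rV[R]_m) : \bar R :=
  ereal_inf [set ((1 - alpha) *
       limn (fun n => \sum_(t < n) alpha ^+ t * k (traj y0 u t) (u t)))%R%:E
            | u in admissible y0].

Definition dstar (y0 : 'rV[R]_m) : \bar R :=
  ereal_sup [set mu%:E | mu in [set mu : R | exists psi eta : 'rV[R]_m -> R,
     [/\ {within Y, continuous psi}, {within Y, continuous eta} &
      forall y u, Gset y u ->
        (0 <= k y u + psi y0 - psi y + eta (f y u) - eta y - mu)%R /\
        (0 <= psi (f y u) - psi y)%R]]].
End Control.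

(* Main.v *)
Require Import Defs.
From HB Require Import structures.
From mathcomp Require Import all_boot all_order all_algebra.
From mathcomp Require Import all_classical all_reals all_analysis.
From mathcomp Require Import lra.
Import Order.TTheory GRing.Theory Num.Theory.
Import numFieldNormedType.Exports.
Local Open Scope classical_set_scope.
Local Open Scope ring_scope.
Set Implicit Arguments. Unset Strict Implicit.

Section Core.
Context {R : realType} {m : nat} {U0 : Type}.
Variables (Y : set 'rV[R]_m) (U : 'rV[R]_m -> set U0)
  (f : 'rV[R]_m -> U0 -> 'rV[R]_m) (k : 'rV[R]_m -> U0 -> R).
Variables (y0 : 'rV[R]_m) (mu : R) (psi eta : 'rV[R]_m -> R) (M : R).
Hypothesis Y0 : Y y0.
Hypothesis feas : forall y u, Gset Y U f y u ->
        (0 <= k y u + psi y0 - psi y + eta (f y u) - eta y - mu) /\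
        (0 <= psi (f y u) - psi y).
Hypothesis etaM : forall y, Y y -> `|eta y| <= M.

Lemma traj_in T u : admissibleT Y U f T y0 u -> forall t, (t <= T)%N ->
  Y (traj f y0 u t) /\ psi y0 <= psi (traj f y0 u t).
Proof.
move=> adm; elim=> [|t IH] tT /=; first by split.
have tT' : (t < T)%N by [].
have [Yt Pt] := IH (ltnW tT').
have A := adm _ tT'.
have [_ H2] := feas (conj Yt A).
by split; [case: A|lra].
Qed.

Lemma sumT_bound T u : admissibleT Y U f T y0 u ->
  T%:R * mu - 2 * M <= \sum_(t < T) k (traj f y0 u t) (u t).
Proof.
move=> adm.
have inv : forall n, (n <= T)%N ->
  n%:R * mu + eta y0 - eta (traj f y0 u n) <= \sum_(t < n) k (traj f y0 u t) (u t).
  elim=> [|n IH] nT; first by rewrite big_ord0 /=; lra.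
  have nT' : (n < T)%N by [].
  rewrite big_ord_recr /=.
  have [Yn Pn] := traj_in adm (ltnW nT').
  have [H1 _] := feas (conj Yn (adm _ nT')).
  have := IH (ltnW nT'); rewrite -natr1; lra.
have := inv T (leqnn T).
have [YT _] := traj_in adm (leqnn T).
have := etaM Y0; have := etaM YT; rewrite !ler_norml; lra.
Qed.

Lemma sumA_bound (alpha : R) u : 0 <= alpha <= 1 -> admissible Y U f y0 u ->
  forall n, mu - 2 * M * (1 - alpha) <=
   (1 - alpha) * \sum_(t < n) alpha ^+ t * k (traj f y0 u t) (u t) + mu * alpha ^+ n.
Proof.
move=> /andP[a0 a1] adm.
have admT : forall T, admissibleT Y U f T y0 u by move=> T t _; exact: adm.
have inv : forall n, 
  mu * (1 - alpha ^+ n) + (1 - alpha) * (eta y0 - alpha ^+ n * eta (traj f y0 u n)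
     - (1 - alpha ^+ n) * M)
   <= (1 - alpha) * \sum_(t < n) alpha ^+ t * k (traj f y0 u t) (u t).
  elim=> [|n IH]; first by rewrite big_ord0 expr0 /=; lra.
  rewrite big_ord_recr /= exprS.
  have [Yn Pn] := traj_in (admT n.+1) (leqnSn n).
  have [H1 _] := feas (conj Yn (adm n)).
  have [Yn1 _] := traj_in (admT n.+1) (leqnn n.+1).
  have e1 := etaM Yn1; rewrite ler_norml in e1; case/andP: e1 => _ e1.
  have an0 : 0 <= alpha ^+ n by rewrite exprn_ge0.
  have an1 : alpha ^+ n <= 1 by rewrite exprn_ile1.
  have P1 : 0 <= (1 - alpha) * alpha ^+ n *
      (k (traj f y0 u n) (u n) + psi y0 - psi (traj f y0 u n)
        + eta (f (traj f y0 u n) (u n)) - eta (traj f y0 u n) - mu).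
    by rewrite !mulr_ge0 // subr_ge0.
  have P2 : 0 <= (1 - alpha) * (alpha ^+ n * (1 - alpha)) *
      (M - eta (f (traj f y0 u n) (u n))).
    by rewrite !mulr_ge0 // subr_ge0.
  have P3 : 0 <= (1 - alpha) * alpha ^+ n * (psi (traj f y0 u n) - psi y0).
    by rewrite !mulr_ge0 // subr_ge0.
  move: IH P1 P2 P3; nra.
move=> n.
have := inv n.
have [Yn _] := traj_in (admT n) (leqnn n).
have := etaM Y0; have := etaM Yn; rewrite !ler_norml.
have an0 : 0 <= alpha ^+ n by rewrite exprn_ge0.
have an1 : alpha ^+ n <= 1 by rewrite exprn_ile1.
move=> /andP[h1 h2] /andP[h3 h4].
have Q1 : 0 <= (1 - alpha) * alpha ^+ n * (M - eta (traj f y0 u n)).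
  by rewrite !mulr_ge0 // subr_ge0.
have Q2 : 0 <= (1 - alpha) * (1 - alpha ^+ n) * M.
  have M0 : 0 <= M by have := etaM Y0; move: (normr_ge0 (eta y0)); lra.
  by rewrite !mulr_ge0 // subr_ge0.
have Q3 : 0 <= (1 - alpha) * (M + eta y0) by apply: mulr_ge0; lra.
nra.
Qed.
End Core.
Lemma liminf_ge (R : realType) (T : choiceType) (X : filteredType T)
  (g : X -> \bar R) (F : set_system X) (mu : R) :
  (forall e, 0 < e -> F [set x | ((mu - e)%:E <= g x)%E]) ->
  (mu%:E <= limf_einf g F)%E.
Proof.
move=> H; apply/lee_subgt0Pr => e e0; rewrite limf_einfE.
apply: (le_trans _ (ereal_sup_ubound _)); last first.
  by exists [set x | ((mu - e)%:E <= g x)%E]; [exact: H|].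
by apply: le_ereal_inf_tmp => _ [x hx <-].
Qed.

Lemma bounded_image (R : realType) (T : topologicalType) (A : set T) (g : T -> R) :
  compact A -> {within A, continuous g} -> exists M, 0 <= M /\ forall x, A x -> `|g x| <= M.
Proof.
move=> cA cg.
have := compact_bounded (continuous_compact cg cA).
case=> M0 [_ HM].
exists (`|M0| + 1); split; first by rewrite addr_ge0.
move=> x Ax.
have := HM (`|M0| + 1); rewrite (_ : (M0 < _) = true); last first.
  by apply: (le_lt_trans (ler_norm M0)); rewrite ltrDl.
by move=> /(_ isT); apply; exists x.
Qed.

Unset Implicit Arguments. Set Strict Implicit.

Theorem proposition2p3 (R : realType) (m : nat) (Y : set 'rV[R]_m)
  (U0 : pseudoMetricType R) (U : 'rV[R]_m -> set U0)
  (f : 'rV[R]_m -> U0 -> 'rV[R]_m) (k : 'rV[R]_m -> U0 -> R) :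
  Y !=set0 -> compact Y ->
  hausdorff_space U0 -> compact [set: U0] ->
  usc_on Y U -> compact_valued_on Y U ->
  continuous (fun p : 'rV[R]_m * U0 => f p.1 p.2) ->
  continuous (fun p : 'rV[R]_m * U0 => k p.1 p.2) ->
  (forall y, Y y -> Aset Y U f y !=set0) ->
  forall y0, Y y0 ->
    (limn_einf (fun T => VT Y U f k T y0) >= dstar Y U f k y0)%E /\
    (limf_einf (fun alpha => halpha Y U f k alpha y0) (1 : R)^'- >= dstar Y U f k y0)%E.
Proof.
move=> _ cY _ cU0 _ _ cf ck _ y0 Y0.
have [K [K0 HK]] : exists K, 0 <= K /\ forall y u, Y y -> `|k y u| <= K.
  have [K [K0 HK]] := @bounded_image R _ (Y `*` [set: U0]) (fun p => k p.1 p.2)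
    (compact_setX cY cU0) (continuous_subspaceT ck).
  by exists K; split => // y u Yy; apply: (HK (y, u)).
split.
- apply: ge_ereal_sup => _ [mu [psi [eta [cpsi ceta H]]] <-].
  have [M [_ HM]] := bounded_image cY ceta.
  have M0 : 0 <= M by have := HM _ Y0; move: (normr_ge0 (eta y0)); lra.
  change (mu%:E <= limf_einf (fun T => VT Y U f k T y0) \oo)%E.
  apply: liminf_ge => e e0.
  exists (Num.truncn (2 * M / e)).+1 => // T /= NT.
  apply: le_ereal_inf_tmp => _ [u adm <-]; rewrite lee_fin.
  have T0 : (0 < T%:R :> R) by rewrite ltr0n (leq_trans _ NT).
  rewrite ler_pdivlMl //.
  have := sumT_bound Y0 H HM adm.
  have : 2 * M / e < T%:R.
    apply: (lt_le_trans (truncnS_gt _)); by rewrite ler_nat.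
  rewrite ltr_pdivrMr // => h1 h2.
  nra.
- apply: ge_ereal_sup => _ [mu [psi [eta [cpsi ceta H]]] <-].
  have [M [_ HM]] := bounded_image cY ceta.
  have M0 : 0 <= M by have := HM _ Y0; move: (normr_ge0 (eta y0)); lra.
  apply: liminf_ge => e e0.
  pose d := e / (2 * M + e + 1).
  have dpos : 0 < 2 * M + e + 1 by lra.
  have dE : d * (2 * M + e + 1) = e by rewrite /d mulrVK // unitfE gt_eqF.
  have d0 : 0 < d by rewrite /d divr_gt0.
  apply/nbhs_ballP; exists d => //= alpha; rewrite /ball /= => hd alt1.
  have a01 : 0 <= alpha <= 1.
    rewrite ltr_norml in hd; case/andP: hd => h1 h2; apply/andP; split; nra.
  have ae : 2 * M * (1 - alpha) <= e.
    rewrite ltr_norml in hd; case/andP: hd => h1 h2; nra.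
  apply: le_ereal_inf_tmp => _ [u adm <-]; rewrite lee_fin.
  have admT : forall T, admissibleT Y U f T y0 u by move=> T t _; exact: adm.
  have a0 : 0 <= alpha by case/andP: a01.
  have an0 : forall n, 0 <= alpha ^+ n by move=> n; rewrite exprn_ge0.
  have na1 : `|alpha| < 1 by rewrite ger0_norm.
  pose S := fun n => \sum_(t < n) alpha ^+ t * k (traj f y0 u t) (u t).
  have eqS : S = series (fun t => alpha ^+ t * k (traj f y0 u t) (u t)).
    by apply/funext => n; rewrite /series /= big_mkord.
  have Sc : cvgn S.
    rewrite eqS; apply: normed_cvg.
    apply: (@series_le_cvg _ _ (geometric K alpha)).
    - by move=> n /=; exact: normr_ge0.
    - by move=> n; rewrite /geometric /= mulr_ge0.
    - move=> n; rewrite /geometric /= normrM mulrC [`|alpha ^+ _|]ger0_norm //.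
      apply: ler_wpM2r => //.
      by apply: HK; have [] := traj_in Y0 H (admT n) (leqnn n).
    - exact: is_cvg_geometric_series.
  have cv : (fun n => (1 - alpha) * S n + mu * alpha ^+ n) @ \oo -->
      (1 - alpha) * limn S + mu * 0.
    apply: cvgD; first by apply: cvgMl_tmp; exact: Sc.
    by apply: cvgMl_tmp; apply: cvg_expr.
  have lb : \forall n \near \oo,
      mu - 2 * M * (1 - alpha) <= (1 - alpha) * S n + mu * alpha ^+ n.
    by apply: nearW => n; exact: (sumA_bound Y0 H HM a01 adm).
  have := cvgr_to_ge cv lb.
  rewrite /S mulr0 addr0 => /(_ _)/= h; lra.
Qed.
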